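(* Let $1\le k<n$ and let $C_k=[c_{ij}]_{i,j=1}^k$ be the upper-left $k\times k$ submatrix of an incomplete $n\times n$ pairwise comparison matrix, with $s_i$ the number of missing entries in the $i$-th row of $C_k$. Let $A_k$ be the $k\times k$ matrix with diagonal entries $(A_k)_{ii}=n-s_i-1$ and off-diagonal entries $(A_k)_{ij}=-1$ if $c_{ij}$ is known and $(A_k)_{ij}=0$ if $c_{ij}=?$. Then $A_k$ is invertible; hence the geometric incomplete HRE system $A_k\widehat w=b$ has a unique solution for every $b\in\mathbb{R}^k$.
   Context: An incomplete pairwise comparison matrix has entries either positive reals or unknown, written $c_{ij}=c_{ji}=?$, with known entries satisfying $c_{ii}=1$ and $c_{ij}=1/c_{ji}$. In the geometric HRE method $\widehat w$ is the vector of logarithms of the unknown weights of $a_1,\dots,a_k$, and $b$ depends on the known comparisons and reference weights. *)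

(* Defs.v *)
From HB Require Import structures.
From mathcomp Require Import all_boot all_order all_algebra.
Set Implicit Arguments. Unset Strict Implicit. Unset Printing Implicit Defensive.
Import Order.TTheory GRing.Theory Num.Theory.
Local Open Scope ring_scope.

(* An incomplete pairwise comparison matrix: entries are [Some c] (known,
   positive real) or [None] (unknown, written "?"). *)
Definition is_incomplete_PCM (R : realFieldType) (n : nat)
    (C : 'M[option R]_n) : Prop :=
  (forall i : 'I_n, C i i = Some 1) /\
  (forall i j : 'I_n, C i j = None <-> C j i = None) /\
  (forall (i j : 'I_n) (x : R), C i j = Some x -> 0 < x /\ C j i = Some x^-1).

Definition upleft_sub (T : Type) (n k : nat) (hkn : (k <= n)%N)
    (C : 'M[T]_n) : 'M[T]_k :=
  \matrix_(i < k, j < k) C (widen_ord hkn i) (widen_ord hkn j).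

Definition missing_in_row (R : realFieldType) (k : nat)
    (Ck : 'M[option R]_k) (i : 'I_k) : nat :=
  #|[set j : 'I_k | Ck i j == None]|.

Definition HRE_matrix (R : realFieldType) (n k : nat)
    (Ck : 'M[option R]_k) : 'M[R]_k :=
  \matrix_(i < k, j < k)
    if i == j then n%:R - (missing_in_row Ck i)%:R - 1
    else if Ck i j == None then 0 else -1.

(* Main.v *)
Require Import Defs.
From HB Require Import structures.
From mathcomp Require Import all_boot all_order all_algebra.
From mathcomp Require Import lra.
Import Order.TTheory GRing.Theory Num.Theory.
Local Open Scope ring_scope.

Lemma key (R : realFieldType) (n k : nat) (hk1 : (1 <= k)%N) (hkn : (k < n)%N)
  (Ck : 'M[option R]_k) (hdiag : forall i, Ck i i = Some 1) (v : 'rV[R]_k) :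
  v *m (HRE_matrix n Ck)^T = 0 -> v = 0.
Proof.
set A := HRE_matrix n Ck => hv.
pose i0 : 'I_k := Ordinal hk1.
pose F := fun j : 'I_k => `|v 0 j|.
have [i _ imax] := @arg_maxP _ R _ i0 xpredT F isT.
set m := F _ in imax.
have hvi : \sum_j A i j * v 0 j = 0.
  transitivity ((v *m A^T) 0 i); last by rewrite hv mxE.
  by rewrite mxE; apply: eq_bigr => j _; rewrite !mxE mulrC.
pose N := fun j : 'I_k => ((Ck i j == None) : nat)%:R : R.
have hs : (missing_in_row Ck i)%:R = \sum_(j | j != i) N j.
  rewrite /missing_in_row -sum1_card natr_sum big_mkcond /=.
  rewrite (bigD1 i) //= in_set hdiag /= add0r [LHS]big_mkcond [RHS]big_mkcond /=.
  apply: eq_bigr => j _; rewrite in_set /N.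
  by case: (j != i) => //; case: (Ck i j == None).
have hk : \sum_(j | j != i) (1 : R) = k%:R - 1.
  rewrite sumr_const (_ : #|_| = k.-1); last by have := cardC1 i; rewrite card_ord => <-.
  by rewrite -[in RHS](prednK hk1) -natr1 addrK.
have hAii : A i i = n%:R - (missing_in_row Ck i)%:R - 1 by rewrite mxE eqxx.
have hAij : forall j, j != i -> `|A i j| = 1 - N j.
  move=> j /negbTE ji; rewrite mxE eq_sym ji /N.
  by case: (Ck i j == None) => /=; rewrite ?normr0 ?normrN ?normr1 ?subr0 ?subrr.
move: hvi; rewrite (bigD1 i) //= => /eqP; rewrite addr_eq0 => /eqP heq.
have h1 : A i i * m <= (k%:R - 1 - (missing_in_row Ck i)%:R) * m.
  apply: (le_trans (y := `|A i i * v 0 i|)).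
    by rewrite normrM; apply: ler_wpM2r; [exact: normr_ge0 | exact: ler_norm].
  rewrite heq normrN; apply: (le_trans (ler_norm_sum _ _ _)).
  rewrite hs -hk -sumrB mulr_suml; apply: ler_sum => j ji.
  rewrite normrM hAij //; apply: ler_wpM2l; last exact: imax.
  by rewrite subr_ge0 /N; case: (Ck i j == None).
have hnk : (k%:R : R) + 1 <= n%:R by rewrite natr1 ler_nat.
have m0 : m = 0.
  apply/eqP; rewrite eq_le normr_ge0 andbT.
  rewrite hAii in h1.
  have : (n%:R - k%:R) * m <= 0 by lra.
  have mge : 0 <= m by exact: normr_ge0.
  nra.
apply/rowP => j; rewrite mxE; apply/eqP.
by rewrite -normr_eq0 eq_le normr_ge0 andbT -m0; exact: (imax j).
Qed.

Theorem mainTheorem10 (R : realFieldType) (n k : nat)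
    (hk1 : (1 <= k)%N) (hkn : (k < n)%N) (C : 'M[option R]_n) :
  is_incomplete_PCM C ->
  let A := HRE_matrix n (upleft_sub (ltnW hkn) C) in
  A \in unitmx /\ (forall b : 'cV[R]_k, exists! w : 'cV[R]_k, A *m w = b).
Proof.
move=> [hd _] A.
have hU : A \in unitmx.
  rewrite -unitmx_tr -row_free_unit; apply: inj_row_free => v.
  have hdg : forall i, upleft_sub (ltnW hkn) C i i = Some 1.
    by move=> i; rewrite /upleft_sub mxE hd.
  exact: (@key R n k hk1 hkn _ hdg v).
split=> // b; exists (invmx A *m b); split.
  by rewrite mulmxA mulmxV // mul1mx.
by move=> w <-; rewrite mulmxA mulVmx // mul1mx.
Qed.
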